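(* Let $k\ge 1$ be an integer and let $T$ be the complete rooted tree with root $r$ and depth $k$ in which every internal node has exactly $k^4$ children. Assign to each edge $e$ of $T$ an independent arrival time $r_e$ uniform on $[0,1]$. Then with probability at least $1-\frac{2k^{2k}}{e^{k^3/8}}$ there exists a bad subtree of $T$.
   Context: The height of a node $u$ of $T$ is the number of edges between $u$ and a closest leaf (so leaves have height $0$ and $r$ has height $k$). A child edge of $u$ is an edge from $u$ to one of its children. For $h=1,\dots,k$ let $I_h=((h-1)/k,\,h/k)$. A non-leaf node $u$ of height $h$ is bad if at least $k^2$ of its child edges $e$ have arrival time $r_e\in I_h$. A bad subtree is a subtree $T'$ of $T$ containing the root $r$ that is a full $k^2$-ary tree of height $k$ (every internal node of $T'$ has exactly $k^2$ children in $T'$, which are children in $T$, and all leaves of $T'$ are leaves of $T$) and all of whose internal nodes are bad. *)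

(* Defs.v *)
From HB Require Import structures.
From mathcomp Require Import all_boot all_order all_algebra.
From mathcomp Require Import all_classical all_reals all_analysis.
Set Implicit Arguments. Unset Strict Implicit. Unset Printing Implicit Defensive.
Import Order.TTheory GRing.Theory Num.Theory.
Local Open Scope classical_set_scope.
Local Open Scope ring_scope.

(* A node is encoded by the path from it up to the root: a sequence
   [:: i_d; ...; i_1] of child indices in 'I_(k^4), the root being [::].
   The children of u are the (i :: u), i : 'I_(k^4); the depth of u is
   size u, and the nodes of T are the u with size u <= k.
   Since T is complete, all leaves are at depth k, so the height of u
   (distance to the closest leaf) is k - size u.
   Each edge of T is identified with its child endpoint v, so the edges
   of T are the v with 1 <= size v <= k. *)

Definition node (k : nat) := seq 'I_(k ^ 4).

Definition is_edge (k : nat) (v : node k) : bool := (0 < size v <= k)%N.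

Definition height (k : nat) (u : node k) : nat := (k - size u)%N.

Definition in_I {R : realType} (k h : nat) (x : R) : bool :=
  ((h%:R - 1) / k%:R < x) && (x < h%:R / k%:R).

Definition bad {R : realType} (k : nat) (a : node k -> R) (u : node k) : Prop :=
  (size u < k)%N /\
  (k ^ 2 <= #|[pred i : 'I_(k ^ 4) | @in_I R k (@height k u) (a (i :: u))]|)%N.

(* S (a set of nodes of T) is (the node set of) a bad subtree:
   a subtree containing the root (nodes of T, contains the root, closed under
   taking parents, hence connected), in which every node of depth < k
   (i.e. every node that is not a leaf of T) has exactly k^2 children in S and
   is bad.  Then S is a full k^2-ary tree of height k all of whose leaves are
   leaves of T, and all of whose internal nodes are bad. *)
Definition bad_subtree {R : realType} (k : nat) (a : node k -> R)
    (S : node k -> bool) : Prop :=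
  [/\ S [::],
      (forall u, S u -> (size u <= k)%N),
      (forall (i : 'I_(k ^ 4)) u, S (i :: u) -> S u) &
      (forall u, S u -> (size u < k)%N ->
         #|[pred i : 'I_(k ^ 4) | S (i :: u)]| = (k ^ 2)%N /\ @bad R k a u)].

Definition edges_independent d (T : measurableType d) (R : realType)
    (P : probability T R) (k : nat) (r : node k -> {RV P >-> R}) : Prop :=
  forall (s : seq (node k)), uniq s -> all (@is_edge k) s ->
  forall (B : node k -> set R), (forall e, measurable (B e)) ->
    P (\bigcap_(e in [set` s]) (r e @^-1` B e)) =
    (\prod_(e <- s) P (r e @^-1` B e))%E.

Definition edges_uniform d (T : measurableType d) (R : realType)
    (P : probability T R) (k : nat) (r : node k -> {RV P >-> R}) : Prop :=
  forall e, is_edge e -> forall A : set R, measurable A ->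
    P (r e @^-1` A) = (@lebesgue_measure R) (A `&` [set x | 0 <= x <= 1]).

(* Main.v *)
Require Import Defs.
From HB Require Import structures.
From mathcomp Require Import all_boot all_order all_algebra.
From mathcomp Require Import all_classical all_reals all_analysis.
From mathcomp Require Import ring lra zify.
Import Order.TTheory GRing.Theory Num.Theory.
Local Open Scope classical_set_scope.
Local Open Scope ring_scope.



Lemma card_lt_ord (n m : nat) : (m <= n)%N ->
  #|[pred i : 'I_n | (i < m)%N]| = m.
Proof.
move=> hmn; rewrite cardE size_filter -enumT.
have -> : count [pred i : 'I_n | (i < m)%N] (enum 'I_n)
  = count (fun x => (x < m)%N) (map val (enum 'I_n)) by rewrite count_map.
rewrite val_enum_ord -(subnKC hmn) iotaD count_cat.
rewrite (eq_in_count (a2 := predT)); last by move=> x; rewrite mem_iota.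
rewrite count_predT size_iota (eq_in_count (a2 := pred0)).
  by rewrite count_pred0 addn0.
by move=> x; rewrite mem_iota add0n /= => /andP[h _]; rewrite ltnNge h.
Qed.

Section Levels.
Variable n : nat.
Fixpoint lev (A : seq 'I_n) (j : nat) : seq (seq 'I_n) :=
  if j is j'.+1 then [seq i :: u | i <- A, u <- lev A j'] else [:: [::]].
Fixpoint Ul (A : seq 'I_n) (j : nat) : seq (seq 'I_n) :=
  if j is j'.+1 then lev A j' ++ Ul A j' else [::].

Lemma lev_mem A u : all (mem A) u -> u \in lev A (size u).
Proof.
elim: u => [|i u IH] /=; first by rewrite inE.
by move=> /andP[hi hu]; apply: allpairs_f => //; apply: IH.
Qed.

Lemma Ul_mem A u j : all (mem A) u -> (size u < j)%N -> u \in Ul A j.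
Proof.
move=> hu; elim: j => [|j IH] //=; rewrite ltnS leq_eqVlt mem_cat.
by case/orP=> [/eqP <-|/IH ->]; rewrite ?orbT ?lev_mem.
Qed.

Lemma size_lev A j : size (lev A j) = (size A ^ j)%N.
Proof. by elim: j => [|j IH] //=; rewrite size_allpairs IH expnS. Qed.

Lemma size_Ul A j : (2 <= size A)%N -> (size (Ul A j) <= size A ^ j)%N.
Proof.
move=> h2; elim: j => [|j IH] //=; rewrite size_cat size_lev expnS.
apply: (leq_trans (leq_add (leqnn _) IH)).
by rewrite addnn -mul2n leq_mul2r h2 orbT.
Qed.
End Levels.
Arguments lev {n}.
Arguments Ul {n}.
Section Gen.
Variables (d : measure_display) (T : measurableType d) (R : realType)
  (P : probability T R).

Lemma in_bigU (I : eqType) (s : seq I) (Q : pred I) (F : I -> set T) w :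
  (\big[setU/set0]_(i <- s | Q i) F i) w <-> exists i, [/\ i \in s, Q i & F i w].
Proof.
elim: s => [|x s IH]; rewrite ?big_nil ?big_cons.
  by split=> // -[i []].
case: ifP => hQ.
  split.
    case=> [h|/IH [i [h1 h2 h3]]]; first by exists x; rewrite inE eqxx.
    by exists i; rewrite inE h1 orbT.
  move=> [i [+ h2 h3]]; rewrite inE => /orP[/eqP <-|h1]; first by left.
  by right; apply/IH; exists i.
split.
  by move=> /IH [i [h1 h2 h3]]; exists i; rewrite inE h1 orbT.
move=> [i [+ h2 h3]]; rewrite inE => /orP[/eqP ei|h1].
  by move: hQ; rewrite -ei h2.
by apply/IH; exists i.
Qed.

Lemma meas_bigU (I : Type) (s : seq I) (Q : pred I) (F : I -> set T) :
  (forall i, measurable (F i)) -> measurable (\big[setU/set0]_(i <- s | Q i) F i).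
Proof.
move=> mF; elim: s => [|x s IH]; rewrite ?big_nil ?big_cons //.
by case: (Q x) => //; exact: measurableU.
Qed.

Lemma P_bigU (I : Type) (s : seq I) (Q : pred I) (F : I -> set T) :
  (forall i, measurable (F i)) ->
  (P (\big[setU/set0]_(i <- s | Q i) F i) <= \sum_(i <- s | Q i) P (F i))%E.
Proof.
move=> mF; elim: s => [|x s IH]; rewrite ?big_nil ?big_cons ?measure0 //.
case: (Q x) => //.
apply: (le_trans (measureU2 _ _ _)) => //; first exact: meas_bigU.
exact: leeD.
Qed.

Lemma meas_exists (I : countType) (F : I -> set T) :
  (forall i, measurable (F i)) -> measurable [set w | exists i, F i w].
Proof.
move=> mF; have -> : [set w | exists i, F i w] = \bigcup_i F i.
  by apply/seteqP; split=> w /= [i]; [exists i | move=> _ ?; exists i].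
exact: countable_bigcupT_measurable (countableP _) mF.
Qed.

Lemma meas_forall_seq (I : eqType) (s : seq I) (F : I -> set T) :
  (forall i, measurable (F i)) -> measurable [set w | forall i, i \in s -> F i w].
Proof.
move=> mF; elim: s => [|x s IH].
  have -> : [set w | forall i, i \in [::] -> F i w] = setT by apply/seteqP; split.
  exact: measurableT.
have -> : [set w | forall i, i \in x :: s -> F i w] =
  F x `&` [set w | forall i, i \in s -> F i w].
  apply/seteqP; split=> w /=.
    by move=> h; split=> [|i hi]; apply: h; rewrite inE ?eqxx ?hi ?orbT.
  by move=> [h1 h2] i; rewrite inE => /orP[/eqP ->|/h2].
exact: measurableI.
Qed.
End Gen.
Section Main.
Variables (d : measure_display) (T : measurableType d) (R : realType)
  (P : probability T R) (k : nat) (hk : (0 < k)%N)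
  (r : node k -> {RV P >-> R})
  (hind : edges_independent r) (hunif : edges_uniform r).

Definition Ih (u : node k) : set R :=
  [set` `]((((@height k u)%:R - 1) / k%:R) : R), ((@height k u)%:R / k%:R)[ ].
Definition Bs (u : node k) (b : bool) : set R := if b then Ih u else ~` Ih u.
Definition pf (b : bool) : R := if b then k%:R^-1 else 1 - k%:R^-1.

Lemma meas_Bs u b : measurable (Bs u b).
Proof. by case: b; rewrite /Bs /Ih; [|apply: measurableC]; apply: measurable_itv. Qed.

Lemma P_Bs u (i : 'I_(k ^ 4)) b : (size u < k)%N ->
  P (r (i :: u) @^-1` Bs u b) = (pf b)%:E.
Proof.
move=> hu.
have hedge : is_edge (i :: u) by rewrite /is_edge /=.
have kpos : (0 < k%:R :> R) by rewrite ltr0n.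
have hh1 : (1 <= @height k u)%N by rewrite /height subn_gt0.
  have hh2 : (@height k u <= k)%N by rewrite /height leq_subr.
  have hIh : P (r (i :: u) @^-1` Ih u) = (k%:R^-1)%:E.
  rewrite hunif //; last exact: measurable_itv.
  have -> : Ih u `&` [set x | 0 <= x <= 1] = Ih u.
    apply/seteqP; split=> x; first by case.
    move=> hx; split=> //=; move: hx; rewrite /Ih /= in_itv /= => /andP[h1 h2].
    apply/andP; split.
      apply/ltW/(le_lt_trans _ h1); apply: divr_ge0; last exact: ler0n.
      by rewrite subr_ge0 ler1n.
    by apply/ltW/(lt_le_trans h2); rewrite ler_pdivrMr // mul1r ler_nat.
  rewrite /Ih lebesgue_measure_itv /=.
  have hlt : ((@height k u)%:R - 1) / k%:R < (@height k u)%:R / k%:R :> R.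
    by rewrite ltr_pM2r ?invr_gt0 // gtrBl ltr01.
  rewrite lte_fin hlt -EFinD; congr EFin; rewrite mulrBl mul1r; ring.
case: b => /=; first by rewrite hIh.
rewrite preimage_setC probability_setC ?hIh //.
exact: measurable_funPTI (measurable_itv _).
Qed.

Definition C (u : node k) (f : {ffun 'I_(k ^ 4) -> bool}) : set T :=
  [set w | forall i, Bs u (f i) (r (i :: u) w)].

Lemma P_C u f : (size u < k)%N -> P (C u f) = (\prod_i pf (f i))%:E.
Proof.
move=> hu.
set s := [seq i :: u | i <- index_enum 'I_(k ^ 4)].
pose B := fun e : node k => if e is i :: _ then Bs u (f i) else setT.
have eqC : C u f = \bigcap_(e in [set` s]) (r e @^-1` B e).
  apply/seteqP; split=> w /=.
    by move=> h e /= /mapP [i _ ->]; apply: h.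
  move=> h i; apply: (h (i :: u)) => /=; apply/mapP; exists i => //.
  exact: mem_index_enum.
rewrite eqC hind.
- rewrite big_map -prodEFin; apply: eq_bigr => i _ /=; exact: P_Bs.
- by rewrite map_inj_uniq ?index_enum_uniq // => i j [].
- by apply/allP => e /mapP [i _ ->]; rewrite /is_edge /=.
- by case=> [|i e] /=; [exact: measurableT | exact: meas_Bs].
Qed.

Lemma meas_C u f : measurable (C u f).
Proof.
have -> : C u f = [set w | forall i, i \in index_enum 'I_(k ^ 4) ->
    (r (i :: u) @^-1` Bs u (f i)) w].
  apply/seteqP; split=> w /= h i //; apply: h; exact: mem_index_enum.
apply: meas_forall_seq => i; exact: measurable_funPTI (meas_Bs _ _).
Qed.

Lemma sum_bound :
  \sum_(f : {ffun 'I_(k ^ 4) -> bool} | (#|[pred i | f i]| < k ^ 2)%N)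
     \prod_i pf (f i) <= 2 ^+ (k ^ 2) * (1 - (2 * k%:R)^-1) ^+ (k ^ 4).
Proof.
have kpos : (0 < k%:R :> R) by rewrite ltr0n.
have kinv1 : k%:R^-1 <= 1 :> R by rewrite invf_le1 // ler1n.
pose G b : R := if b then k%:R^-1 / 2 else 1 - k%:R^-1.
have G0 b : 0 <= G b.
  by case: b; rewrite /G ?subr_ge0 // divr_ge0 // invr_ge0 ler0n.
apply: (@le_trans _ _ (\sum_(f : {ffun 'I_(k ^ 4) -> bool} | (#|[pred i | f i]| < k ^ 2)%N)
     2 ^+ (k ^ 2) * \prod_i G (f i))).
  apply: ler_sum => f hf.
  have -> : \prod_i pf (f i) = (\prod_i G (f i)) * \prod_i (if f i then 2 else 1).
    rewrite -big_split; apply: eq_bigr => i _ /=; rewrite /G /pf.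
    by case: (f i); rewrite ?mulr1 // -mulrA mulVf ?mulr1 // pnatr_eq0.
  rewrite mulrC; apply: ler_wpM2r; first exact: prodr_ge0.
  rewrite -big_mkcond /= prodr_const.
  by apply: ler_weXn2l; [rewrite ler1n | apply: ltnW].
rewrite -mulr_sumr; apply: ler_wpM2l; first by rewrite exprn_ge0.
apply: (@le_trans _ _ (\sum_(f : {ffun 'I_(k ^ 4) -> bool}) \prod_i G (f i))).
  rewrite [X in _ <= X](bigID (fun f : {ffun 'I_(k ^ 4) -> bool} =>
     (#|[pred i | f i]| < k ^ 2)%N)) /= lerDl.
  by apply: sumr_ge0 => f _; apply: prodr_ge0.
rewrite -(bigA_distr_bigA (fun (_ : 'I_(k ^ 4)) (b : bool) => G b)) /=.
have -> : \sum_(j : bool) G j = 1 - (2 * k%:R)^-1.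
  rewrite big_bool /G /= invfM; field; rewrite pnatr_eq0 -lt0n hk //.
by rewrite prodr_const card_ord.
Qed.

Lemma exp_bound :
  (1 - (2 * k%:R)^-1) ^+ (k ^ 4) <= expR (- (k%:R ^+ 3 / 2)) :> R.
Proof.
have kpos : (0 < k%:R :> R) by rewrite ltr0n.
have h0 : 0 <= 1 - (2 * k%:R)^-1 :> R.
  rewrite subr_ge0 invf_le1 ?mulr_gt0 //.
  by rewrite -natrM ler1n muln_gt0 hk.
apply: (@le_trans _ _ (expR (- (2 * k%:R)^-1) ^+ (k ^ 4))).
  by apply: lerXn2r; rewrite ?nnegrE ?expR_ge0 //; apply: expR_ge1Dx.
rewrite -expRM_natl natrX.
have -> : (k%:R ^+ 4 * - (2 * k%:R)^-1 : R) = - (k%:R ^+ 3 / 2).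
  by field; rewrite pnatr_eq0 -lt0n hk.
by [].
Qed.

Lemma nat_ineq : (8 * (k ^ 2 - 1) <= 3 * k ^ 3)%N.
Proof.
case: k hk => // [] [|k'] _; first by [].
have -> : (k'.+2 ^ 2 - 1 = k'.+2 * k'.+2 - 1)%N by [].
have -> : (k'.+2 ^ 3 = k'.+2 * k'.+2 * k'.+2)%N by rewrite !expnS expn0 muln1 mulnA.
nia.
Qed.

Lemma final_ineq (N : nat) : (N <= (k ^ 2) ^ k)%N ->
  1 - 2 * (k%:R ^+ (2 * k)) / expR (k%:R ^+ 3 / 8) <=
  1 - N%:R * (2 ^+ (k ^ 2) * expR (- (k%:R ^+ 3 / 2))) :> R.
Proof.
move=> hN.
have kpos : (0 < k%:R :> R) by rewrite ltr0n.
rewrite lerD2l lerN2.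
have hN' : N%:R <= k%:R ^+ (2 * k) :> R.
  by rewrite -natrX ler_nat expnM.
have h2 : 2 ^+ (k ^ 2) * expR (- (k%:R ^+ 3 / 2)) <= 2 * expR (- (k%:R ^+ 3 / 8)) :> R.
  have hm : (k ^ 2 = (k ^ 2 - 1).+1)%N by rewrite subn1 prednK // expn_gt0 hk.
  rewrite hm exprS -mulrA ler_wpM2l //.
  apply: (@le_trans _ _ (expR 1 ^+ (k ^ 2 - 1) * expR (- (k%:R ^+ 3 / 2)))).
    apply: ler_wpM2r; first exact: expR_ge0.
    apply: lerXn2r; rewrite ?nnegrE ?expR_ge0 //.
    by apply: le_trans (expR_ge1Dx 1); rewrite ?ler0n.
  rewrite -expRM_natl mulr1 -expRD ler_expR.
  have := nat_ineq; rewrite -(ler_nat R) natrM natrM natrX => h.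
  have e : ((k ^ 2 - 1)%N%:R : R) <= 3 / 8 * k%:R ^+ 3.
    by rewrite -ler_pdivlMl // in h *; lra.
  lra.
have -> : 2 * k%:R ^+ (2 * k) / expR (k%:R ^+ 3 / 8) =
    k%:R ^+ (2 * k) * (2 * expR (- (k%:R ^+ 3 / 8))) :> R.
  by rewrite expRN; ring.
apply: ler_pM => //; apply: mulr_ge0; rewrite ?exprn_ge0 ?expR_ge0 //.
Qed.

Lemma size_Ul2 (A : seq 'I_(k ^ 4)) j : (0 < size A)%N ->
  (j <= 1)%N || (2 <= size A)%N -> (size (Ul A j) <= size A ^ j)%N.
Proof.
move=> h1; case h2: (2 <= size A)%N; first by move=> _; apply: size_Ul.
rewrite orbF; case: j => [|[|j]] //=; rewrite cats0 size_lev expn0 expn1 //.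
Qed.

Lemma lev_size (A : seq 'I_(k ^ 4)) j u : u \in lev A j -> size u = j.
Proof.
elim: j u => [|j IH] u /=; first by rewrite inE => /eqP ->.
by case/allpairsP => -[i v] [_ /IH h ->] /=; rewrite h.
Qed.

Lemma Ul_size (A : seq 'I_(k ^ 4)) j u : u \in Ul A j -> (size u < j)%N.
Proof.
elim: j => [|j IH] //=; rewrite mem_cat => /orP[/lev_size ->//|/IH].
exact: ltnW.
Qed.

Lemma Ih_in u x : Ih u x <-> @in_I R k (@height k u) x.
Proof. by rewrite /Ih /in_I /= in_itv. Qed.

Definition ind (u : node k) (w : T) : {ffun 'I_(k ^ 4) -> bool} :=
  [ffun i => @in_I R k (@height k u) (r (i :: u) w)].

Lemma C_ind u w : C u (ind u w) w.
Proof.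
move=> i; rewrite /ind ffunE /Bs; case h: (in_I _ _ _).
  exact/Ih_in.
by move=> /Ih_in; rewrite h.
Qed.

Lemma C_eq u f w : C u f w -> f = ind u w.
Proof.
move=> h; apply/ffunP => i; rewrite /ind ffunE; move: (h i); rewrite /Bs.
case: (f i) => [/Ih_in -> //| h']; apply/esym/negbTE/negP => hin.
by apply: h'; apply/Ih_in.
Qed.

Lemma cnt_ind u w : #|[pred i | ind u w i]| =
  #|[pred i : 'I_(k ^ 4) | @in_I R k (@height k u) (r (i :: u) w)]|.
Proof. by apply: eq_card => i; rewrite !inE /ind ffunE. Qed.

Lemma meas_bad u : measurable [set w | @bad R k (fun e => r e w) u].
Proof.
case hu: (size u < k)%N; last first.
  have -> : [set w | @bad R k (fun e => r e w) u] = set0.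
    by apply/seteqP; split=> w // [h _]; move: hu; rewrite h.
  exact: measurable0.
pose F (f : {ffun 'I_(k ^ 4) -> bool}) :=
  if (k ^ 2 <= #|[pred i | f i]|)%N then C u f else set0.
have -> : [set w | @bad R k (fun e => r e w) u] = [set w | exists f, F f w].
  apply/seteqP; split=> w /=.
    move=> [_ h]; exists (ind u w); rewrite /F cnt_ind h; exact: C_ind.
  move=> [f]; rewrite /F; case: ifP => // hc /[dup] hC /C_eq ef.
  by split=> //; rewrite -cnt_ind -ef.
apply: meas_exists => f; rewrite /F; case: ifP => _; [exact: meas_C | exact: measurable0].
Qed.

Lemma sum_const_seq (I : Type) (s : seq I) (c : R) :
  \sum_(i <- s) c = (size s)%:R * c.
Proof.
elim: s => [|x s IH]; rewrite ?big_nil ?big_cons ?mul0r // IH /=.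
by rewrite -addn1 natrD mulrDl mul1r addrC.
Qed.

Definition small : seq 'I_(k ^ 4) := enum [pred i : 'I_(k ^ 4) | (i < k ^ 2)%N].

Lemma hmn : (k ^ 2 <= k ^ 4)%N.
Proof. by rewrite leq_pexp2l. Qed.

Lemma size_small : size small = (k ^ 2)%N.
Proof. by rewrite /small -cardE card_lt_ord // hmn. Qed.

Lemma meas_E : measurable [set w | exists S : node k -> bool,
                  @bad_subtree R k (fun e => r e w) S].
Proof.
pose Es (s : seq (node k)) :=
  [set w | @bad_subtree R k (fun e => r e w) (fun u => u \in s)].
have -> : [set w | exists S : node k -> bool, @bad_subtree R k (fun e => r e w) S]
   = [set w | exists s, Es s w].
  apply/seteqP; split=> w /=; last by move=> [s h]; exists (fun u => u \in s).
  move=> [S hS].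
  have [s0 eS] : exists s0 : seq (node k), forall u, S u = (u \in s0).
    exists [seq u <- Ul (index_enum 'I_(k ^ 4)) k.+1 | S u].
    move=> u; apply/esym; rewrite mem_filter; case hSu: (S u) => //; rewrite andTb.
    apply: Ul_mem; first by apply/allP => i _; exact: mem_index_enum.
    by case: hS => _ h _ _; rewrite ltnS h.
  exists s0; move: hS; rewrite (funext eS) => hS; exact: hS.
apply: meas_exists => s.
pose Sf := fun u : node k => u \in s.
have [A|nA] := pselect ([/\ Sf [::], (forall u, Sf u -> (size u <= k)%N),
   (forall (i : 'I_(k ^ 4)) u, Sf (i :: u) -> Sf u) &
   (forall u, Sf u -> (size u < k)%N -> #|[pred i : 'I_(k ^ 4) | Sf (i :: u)]| = (k ^ 2)%N)]).
  pose F := fun u => if (size u < k)%N then [set w | @bad R k (fun e => r e w) u]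
    else setT.
  have -> : Es s = [set w | forall u, u \in s -> F u w].
    apply/seteqP; split=> w /=.
      case=> _ _ _ h u hu; rewrite /F; case: ifP => // hk'.
      by case: (h u hu hk').
    case: A => a1 a2 a3 a4 h; split=> // u hu hk'; split; first exact: a4.
    by move: (h u hu); rewrite /F hk'.
  apply: meas_forall_seq => u; rewrite /F; case: ifP => _.
    exact: meas_bad.
  exact: measurableT.
have -> : Es s = set0.
  apply/seteqP; split=> w //= [a1 a2 a3 a4]; apply: nA; split=> //.
  by move=> u hu hk'; case: (a4 u hu hk').
exact: measurable0.
Qed.

Lemma main_sec :
  ((1 - 2 * (k%:R ^+ (2 * k)) / expR (k%:R ^+ 3 / 8))%:E <=
     P [set w | exists S : node k -> bool,
                  @bad_subtree R k (fun e => r e w) S])%E.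
Proof.
set E := [set w | exists S : node k -> bool, @bad_subtree R k (fun e => r e w) S].
set U := Ul small k.
pose D := \big[setU/set0]_(u <- U)
  \big[setU/set0]_(f : {ffun 'I_(k ^ 4) -> bool} | (#|[pred i | f i]| < k ^ 2)%N) C u f.
have mD : measurable D.
  by apply: meas_bigU => u; apply: meas_bigU => f; exact: meas_C.
have sub : ~` D `<=` E.
  move=> w hw.
  exists (fun u : node k => (size u <= k)%N && all (fun i : 'I_(k ^ 4) => (i < k ^ 2)%N) u).
  split=> //.
  - by move=> u /andP[].
  - by move=> i u /= /andP[h1 /andP[_ h2]]; rewrite h2 andbT ltnW.
  move=> u /andP[_ hall] hu; split.
    apply: etrans (@card_lt_ord _ _ hmn); apply: eq_card => i; rewrite !inE /= hall hu andbT.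
    by [].
  split=> //; rewrite leqNgt; apply/negP => hlt; apply: hw.
  apply/in_bigU; exists u; split=> //.
    apply: Ul_mem => //; apply/allP => i hi; suff : i \in small by [].
    by rewrite mem_enum inE; exact: (allP hall).
  apply/in_bigU; exists (ind u w); split; first exact: mem_index_enum.
    by rewrite cnt_ind.
  exact: C_ind.
have hPD : (P D <= ((size U)%:R * (2 ^+ (k ^ 2) * expR (- (k%:R ^+ 3 / 2))))%:E)%E.
  have mI : forall u, measurable (\big[setU/set0]_(f : {ffun 'I_(k ^ 4) -> bool} |
     (#|[pred i | f i]| < k ^ 2)%N) C u f).
    by move=> u; apply: meas_bigU => f; exact: meas_C.
  apply: (le_trans (P_bigU _ _ _ P _ _ _ _ mI)).
  rewrite -sum_const_seq -sumEFin big_seq [X in (_ <= X)%E]big_seq.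
  apply: lee_sum => u hu.
  have hsu : (size u < k)%N by apply: Ul_size hu.
  apply: (le_trans (P_bigU _ _ _ P _ _ _ _ (meas_C u))).
  rewrite (eq_bigr (fun f : {ffun 'I_(k ^ 4) -> bool} => (\prod_i pf (f i))%:E)); last by move=> f _; exact: P_C.
  rewrite sumEFin lee_fin.
  apply: (le_trans sum_bound); apply: ler_wpM2l; first by rewrite exprn_ge0.
  exact: exp_bound.
have hsz : (size U <= (k ^ 2) ^ k)%N.
  rewrite -size_small; apply: size_Ul2; rewrite size_small ?expn_gt0 ?hk //.
  case: k hk => // [] [|k'] _ //=.
have hle : (P (~` D) <= P E)%E.
  by apply: le_measure => //; rewrite inE; [apply: measurableC | apply: meas_E].
apply: le_trans hle.
rewrite probability_setC //.
have hf := fin_num_measure P D mD.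
move: hPD; rewrite -(fineK hf) lee_fin => h.
rewrite -EFinB lee_fin.
apply: (le_trans (final_ineq _ hsz)).
by rewrite lerD2l lerN2.
Qed.
End Main.

Theorem mainTheorem4 (d : measure_display) (T : measurableType d)
    (R : realType) (P : probability T R) (k : nat) (hk : (0 < k)%N)
    (r : node k -> {RV P >-> R})
    (hind : edges_independent r) (hunif : edges_uniform r) :
  ((1 - 2 * (k%:R ^+ (2 * k)) / expR (k%:R ^+ 3 / 8))%:E <=
     P [set w | exists S : node k -> bool,
                  @bad_subtree R k (fun e => r e w) S])%E.
Proof. exact: main_sec. Qed.
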